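(* Let $\mathcal{R}=(W,\unlhd)$ be a poset regarded as a category and consider the presheaf topos $\mathbf{Set}^{\mathcal{R}}$, whose subobject classifier satisfies $\Omega(w)=\{A\cap\uparrow\! w\mid A\subseteq W\text{ upward closed}\}$ with $\uparrow\! w=\{v\mid w\unlhd v\}$. Let $\odot:\Omega\to\Omega$ be the interpretation of $p{:}\Omega\vdash\divideontimes p{:}\Omega$, where $\divideontimes p:=\forall t{:}\Omega.(t\vee(t\Rightarrow p))$. Then for every $w\in W$ and every $A\in\Omega(w)$, $$\odot_w(A)=\{z\in W\mid w\unlhd z\text{ and }\uparrow\! z\setminus\{z\}\subseteq A\}.$$
   Context: $\mathbf{Set}^{\mathcal{R}}$ denotes covariant functors from $\mathcal{R}$ to $\mathbf{Set}$; $\divideontimes$ is expressed in the Mitchell–Bénabou internal language of the topos. *)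

(* Defs.v *)
From mathcomp Require Import all_boot all_order.
Set Implicit Arguments. Unset Strict Implicit. Unset Printing Implicit Defensive.
Import Order.TTheory.
Local Open Scope order_scope.

Section KripkeOmega.
Variables (d : Order.disp_t) (W : porderType d).

Definition upclosed (A : W -> Prop) : Prop := forall x y, x <= y -> A x -> A y.

Definition up (w : W) : W -> Prop := fun v => w <= v.

Record Omega (w : W) := MkOmega {
  oset :> W -> Prop;
  oset_spec : exists A : W -> Prop,
      upclosed A /\ forall v, oset v <-> (A v /\ w <= v) }.

(* restriction map Omega(w) -> Omega(v) for w <= v, on underlying sets:
   A |-> A \cap \uparrow v *)
Definition restr (v : W) (A : W -> Prop) : W -> Prop := fun u => A u /\ v <= u.

Definition om_or (T S : W -> Prop) : W -> Prop := fun u => T u \/ S u.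
Definition om_imp (v : W) (T S : W -> Prop) : W -> Prop :=
  fun u => v <= u /\ forall x, u <= x -> T x -> S x.

(* interpretation of  t, p : Omega |- t \/ (t => p) : Omega  at stage v *)
Definition phi_interp (v : W) (T P : W -> Prop) : W -> Prop :=
  om_or T (om_imp v T P).

(* interpretation of  p : Omega |- forall t : Omega. (t \/ (t => p)) : Omega
   at stage w: the sieve of those z >= w such that, for every v >= z and every
   T in Omega(v), phi_v(T, p|_v) is the top element \uparrow v of Omega(v). *)
Definition odot (w : W) (A : Omega w) : W -> Prop :=
  fun z => w <= z /\
    forall (v : W), z <= v -> forall T : Omega v,
      forall u, v <= u -> phi_interp v T (restr v A) u.

End KripkeOmega.

(* Main.v *)
Require Import Defs.
From mathcomp Require Import all_boot all_order.
From Stdlib Require Import Classical FunctionalExtensionality PropExtensionality.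
Import Order.TTheory.
Local Open Scope order_scope.

Theorem fact5p14 (d : Order.disp_t) (W : porderType d) (w : W) (A : Omega w) :
  odot A = (fun z : W => w <= z /\ (forall y : W, z <= y -> y <> z -> A y)).
Proof.
apply: functional_extensionality => z.
apply: propositional_extensionality; split.
- case=> wz H; split => // y zy yz.
  have TS : exists B : W -> Prop, upclosed B /\
      forall v, (fun x => z <= x /\ x <> z) v <-> (B v /\ z <= v).
    exists (fun x => z < x); split.
      by move=> a b ab za; apply: lt_le_trans za ab.
    move=> v; split.
      by case=> zv vz; split => //; rewrite lt_neqAle zv andbT; apply/eqP => e; apply: vz.
    by case=> zv _; split; [apply: ltW | move=> e; move: zv; rewrite e ltxx].
  have := H z (lexx z) (MkOmega TS) z (lexx z).
  case=> /=.
    by case=> _ [].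
  by case=> _ /(_ y zy (conj zy yz)) [].
- case=> wz H; split => // v zv T u vu.
  case: (classic (T u)) => Tu; [by left|right].
  split => // x ux Tx.
  have vx : v <= x.
    case: (oset_spec T) => B [_ HB]; by case: (proj1 (HB x) Tx).
  split => //.
  apply: H; first by apply: le_trans zv (le_trans vu ux).
  move=> e; apply: Tu.
  have uz : u = z.
    apply/eqP; rewrite eq_le -{1}e ux /=; exact: le_trans zv vu.
  by rewrite uz -e.
Qed.
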